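(* Let $(T,\lambda)$ be an increasing tree. Then $(T,\lambda)$ is left increasing if and only if, for any branchings $b$ and $b'$ of $T$ such that $b$ is to the left of $b'$ and the vertices of $b$ and $b'$ do not lie on a common path connecting a leaf of $T$ with the root of $T$, we have $\lambda(b)<\lambda(b')$.
   Context: A (planar rooted) tree is a finite planar rooted tree in which each vertex has one outgoing edge and at least two incoming edges (ordered left to right), incoming edges being leaves or coming from other vertices; $\varepsilon$ is the trivial tree with no vertex. For $m\ge1$, $\bigvee(T_0,\ldots,T_m)$ joins the roots of $T_0,\ldots,T_m$ to a new vertex with a new root; every non-trivial tree is uniquely such a wedge. A vertex with $j+1$ incoming edges carries $j$ branchings (pairs of consecutive incoming edges); the level $\lambda(b)$ of a branching is the level of its vertex. ''To the left'' refers to the left-to-right order $\preceq$ on branchings defined recursively: for $T=\bigvee(T_0,\ldots,T_m)$ with root branchings $b_1,\ldots,b_m$ ($b_i$ between $T_{i-1}$ and $T_i$), $b_i\prec b\prec b_{i+1}$ for $b$ in $T_i$, branchings of $T_i$ ordered recursively. A level function is a surjection $\lambda$ from vertices onto $[k]$ strictly increasing along each leaf-to-root path; an increasing tree is $(T,\lambda)$. $\mathsf{Inc}$: $\mathsf{Inc}(\varepsilon)=\varepsilon$; if $T=\bigvee(T_0,\ldots,T_m)$ and $\mathsf{Inc}(T_i)=(T_i,\lambda_i)$ with $k_i$ levels, then $\mathsf{Inc}(T)=(T,\lambda)$ with $\lambda(v)=k_0+\cdots+k_{i-1}+\lambda_i(v)$ for vertices $v$ of $T_i$ and root vertex level $k_0+\cdots+k_m+1$.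 An increasing tree is left increasing if it equals $\mathsf{Inc}(T)$ for some tree $T$. *)

(* Defs.v *)
From mathcomp Require Import all_boot.
Set Implicit Arguments. Unset Strict Implicit. Unset Printing Implicit Defensive.

(* Planar rooted trees: [Leaf] is a leaf (the trivial tree eps when it is the
   whole tree); [Node [:: T_0; ...; T_m]] is the wedge V(T_0,...,T_m). *)
Inductive tree := Leaf | Node of seq tree.

Fixpoint wf (t : tree) : bool :=
  match t with
  | Leaf => true
  | Node ts => (1 < size ts) &&
      (fix wfs (l : seq tree) := match l with
                                 | [::] => true
                                 | u :: l' => wf u && wfs l' end) ts
  end.

(* Vertices are addressed by paths from the root: [::] is the root, and
   i :: p is the vertex at address p inside the i-th child T_i. *)
Fixpoint vertices (t : tree) : seq (seq nat) :=
  match t with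
  | Leaf => [::]
  | Node ts => [::] ::
      (fix vs (i : nat) (l : seq tree) := match l with
        | [::] => [::]
        | u :: l' => map (cons i) (vertices u) ++ vs i.+1 l' end) 0 ts
  end.

Definition nverts (t : tree) : nat := size (vertices t).

(* Branchings: (v, j) is the branching of vertex v between its (j-1)-th and
   j-th incoming edges, 1 <= j <= m.  They are listed in the left-to-right
   order: branchings of T_0, b_1, branchings of T_1, b_2, ..., branchings of T_m. *)
Fixpoint branchings (t : tree) : seq (seq nat * nat) :=
  match t with
  | Leaf => [::]
  | Node ts =>
      (fix bs (i : nat) (l : seq tree) := match l with
        | [::] => [::]
        | u :: l' => (if i == 0 then [::] else [:: ([::], i)])
                     ++ map (fun b => (i :: b.1, b.2)) (branchings u)
                     ++ bs i.+1 l' end) 0 ts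
  end.

Definition left_of (t : tree) (b b' : seq nat * nat) : bool :=
  [&& b \in branchings t, b' \in branchings t &
      index b (branchings t) < index b' (branchings t)].

Fixpoint inc (t : tree) (p : seq nat) : nat :=
  match p with
  | [::] => nverts t
  | i :: p' => match t with
               | Leaf => 0
               | Node ts => sumn (map nverts (take i ts)) + inc (nth Leaf ts i) p'
               end
  end.

Definition level_function (t : tree) (lam : seq nat -> nat) (k : nat) : Prop :=
  [/\ (forall v, v \in vertices t -> 1 <= lam v <= k),
      (forall l, 1 <= l <= k -> exists2 v, v \in vertices t & lam v = l) &
      (forall v i, v \in vertices t -> rcons v i \in vertices t ->
         lam (rcons v i) < lam v)].

Definition increasing_tree (t : tree) (lam : seq nat -> nat) : Prop :=
  wf t /\ exists k, level_function t lam k.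

(* (t, lam) = Inc(t) (lam only matters on vertices of t) *)
Definition left_increasing (t : tree) (lam : seq nat -> nat) : Prop :=
  forall v, v \in vertices t -> lam v = inc t v.

Definition on_common_path (v w : seq nat) : bool := prefix v w || prefix w v.

(* Main.v *)
Require Import Defs.
From mathcomp Require Import all_boot zify.
Set Implicit Arguments. Unset Strict Implicit. Unset Printing Implicit Defensive.

Fixpoint tree_ind' (P : tree -> Prop) (HL : P Leaf)
  (HN : forall ts, (forall j, P (nth Leaf ts j)) -> P (Node ts)) (t : tree) : P t :=
  match t with
  | Leaf => HL
  | Node ts => HN ts ((fix G (l : seq tree) : forall j, P (nth Leaf l j) :=
      match l return forall j, P (nth Leaf l j) with
      | [::] => fun j => match j return P (nth Leaf [::] j) with 0 => HL | _.+1 => HL end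
      | u :: l' => fun j => match j return P (nth Leaf (u :: l') j) with
                            | 0 => tree_ind' HL HN u
                            | j'.+1 => G l' j' end
      end) ts)
  end.

Fixpoint vs (i : nat) (l : seq tree) : seq (seq nat) := match l with
  | [::] => [::]
  | u :: l' => map (cons i) (vertices u) ++ vs i.+1 l' end.

Definition blk (i : nat) (u : tree) : seq (seq nat * nat) :=
  (if i == 0 then [::] else [:: ([::], i)])
   ++ map (fun b => (i :: b.1, b.2)) (branchings u).

Fixpoint bs (i : nat) (l : seq tree) : seq (seq nat * nat) := match l with
  | [::] => [::]
  | u :: l' => (if i == 0 then [::] else [:: ([::], i)])
                     ++ map (fun b => (i :: b.1, b.2)) (branchings u)
                     ++ bs i.+1 l' end.

Lemma bs_cons i u l : bs i (u :: l) = blk i u ++ bs i.+1 l.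
Proof. by rewrite /= /blk catA. Qed.

Lemma verticesE ts : vertices (Node ts) = [::] :: vs 0 ts.
Proof. by []. Qed.
Lemma branchingsE ts : branchings (Node ts) = bs 0 ts.
Proof. by []. Qed.
Lemma wfE ts : wf (Node ts) = (1 < size ts) && all wf ts.
Proof. by []. Qed.

Lemma mem_vsP i l v : v \in vs i l ->
  exists j p, [/\ j < size l, v = (i + j) :: p & p \in vertices (nth Leaf l j)].
Proof.
elim: l i => [|u l IH] i //=; rewrite mem_cat => /orP[/mapP[p Hp ->]|/IH[j [p [Hj -> Hp]]]].
  by exists 0, p; rewrite addn0.
by exists j.+1, p; rewrite addSnnS.
Qed.

Lemma mem_vs i l j p : j < size l -> p \in vertices (nth Leaf l j) -> (i + j) :: p \in vs i l.
Proof.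
elim: l i j => [|u l IH] i [|j] //= Hj Hp; rewrite mem_cat.
  by rewrite addn0 map_f.
by rewrite -addSnnS IH ?orbT.
Qed.

Lemma mem_vertN ts v : v \in vertices (Node ts) -> v = [::] \/
  exists j p, [/\ j < size ts, v = j :: p & p \in vertices (nth Leaf ts j)].
Proof.
rewrite verticesE inE => /orP[/eqP->|/mem_vsP[j [p [H1 H2 H3]]]]; first by left.
by right; exists j, p.
Qed.

Lemma mem_vertN2 ts j p : j < size ts -> p \in vertices (nth Leaf ts j) ->
  j :: p \in vertices (Node ts).
Proof. by move=> Hj Hp; rewrite verticesE inE (mem_vs 0 Hj Hp) orbT. Qed.

Lemma mem_vertN0 ts : [::] \in vertices (Node ts).
Proof. by rewrite verticesE inE eqxx. Qed.

Lemma mem_bsP i l b : b \in bs i l -> b.1 = [::] \/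
  exists j q, [/\ j < size l, b.1 = (i + j) :: q & (q, b.2) \in branchings (nth Leaf l j)].
Proof.
elim: l i => [|u l IH] i //=; rewrite !mem_cat => /orP[|/orP[]].
- by case: (i == 0) => //; rewrite inE => /eqP->; left.
- move=> /mapP[[q k] Hq ->] /=; right; exists 0, q; by rewrite addn0.
- move=> /IH[->|[j [q [Hj -> Hq]]]]; first by left.
  by right; exists j.+1, q; rewrite addSnnS.
Qed.

Lemma mem_bs_root i l j : j < size l -> 0 < i + j -> ([::], i + j) \in bs i l.
Proof.
elim: l i j => [|u l IH] i [|j] //= Hj Hp; rewrite !mem_cat.
  by rewrite addn0 in Hp *; rewrite eqn0Ngt Hp /= inE eqxx.
by rewrite -addSnnS IH ?orbT // addSnnS.
Qed.

Lemma mem_bs_child i l j q k : j < size l -> (q, k) \in branchings (nth Leaf l j) ->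
  ((i + j) :: q, k) \in bs i l.
Proof.
elim: l i j => [|u l IH] i [|j] //= Hj Hp; rewrite !mem_cat.
  by rewrite addn0 (map_f (fun b => (i :: b.1, b.2)) Hp) orbT.
by rewrite -addSnnS IH ?orbT.
Qed.

Lemma branch_vert t b : b \in branchings t -> b.1 \in vertices t.
Proof.
elim/tree_ind': t b => [//|ts IH] b; rewrite branchingsE => /mem_bsP[->|[j [q [Hj -> Hq]]]].
  exact: mem_vertN0.
by apply: mem_vertN2 => //; exact: (IH j (q, b.2)).
Qed.

Lemma vert_branch t v : wf t -> v \in vertices t -> (v, 1) \in branchings t.
Proof.
elim/tree_ind': t v => [//|ts IH] v; rewrite wfE => /andP[Hs Hw] /mem_vertN[->|[j [p [Hj -> Hp]]]].
  by rewrite branchingsE (@mem_bs_root 0 ts 1).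
rewrite branchingsE (@mem_bs_child 0 ts j) //; apply: IH => //.
exact: (all_nthP Leaf Hw).
Qed.

Lemma vert_prefix u s t : u ++ s \in vertices t -> u \in vertices t.
Proof.
elim: u t => [|a u IH] [|ts] // H.
case/mem_vertN: H => [//|[j [p [Hj [-> Hp] Hp']]]].
by apply: mem_vertN2 => //; apply: IH; rewrite Hp.
Qed.

Lemma size_vs i l : size (vs i l) = sumn (map nverts l).
Proof. by elim: l i => [|u l IH] i //=; rewrite size_cat size_map IH. Qed.

Lemma nvertsN ts : nverts (Node ts) = (sumn (map nverts ts)).+1.
Proof. by rewrite /nverts verticesE /= size_vs. Qed.

Definition S ts i := sumn (map nverts (take i ts)).

Lemma S_step ts j : j < size ts -> S ts j + nverts (nth Leaf ts j) = S ts j.+1.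
Proof. by move=> Hj; rewrite /S (take_nth Leaf Hj) map_rcons sumn_rcons. Qed.

Lemma S_mono ts i j : i <= j -> S ts i <= S ts j.
Proof.
move=> /subnKC <-; rewrite /S takeD map_cat sumn_cat; exact: leq_addr.
Qed.

Lemma S_le ts j : S ts j <= sumn (map nverts ts).
Proof. by rewrite /S -{2}(cat_take_drop j ts) map_cat sumn_cat leq_addr. Qed.

Lemma inc_range t v : v \in vertices t -> 0 < inc t v <= nverts t.
Proof.
elim/tree_ind': t v => [//|ts IH] v /mem_vertN[->|[j [p [Hj -> Hp]]]].
  by change (0 < nverts (Node ts) <= nverts (Node ts)); rewrite nvertsN leqnn.
have /andP[H1 H2] := IH j p Hp.
rewrite /= nvertsN; apply/andP; split; first by rewrite addn_gt0 H1 orbT.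
apply: leq_trans (leq_add (leqnn _) H2) _; rewrite -/(S ts j) S_step //.
by apply: leq_trans (S_le ts j.+1) _.
Qed.

Lemma inc_dec t v i : v \in vertices t -> rcons v i \in vertices t ->
  inc t (rcons v i) < inc t v.
Proof.
elim/tree_ind': t v => [//|ts IH] [|a v] Hv Hr.
  case/mem_vertN: Hr => [//|[j [p [Hj [Ei Ep] Hp]]]]; subst.
  rewrite /= nvertsN ltnS -/(S ts j).
  by rewrite S_step // S_le.
case/mem_vertN: Hv => [//|[j [p [Hj [Ei Ep] Hp]]]]; subst.
case/mem_vertN: Hr => [//|[j' [p' [Hj' [Ei Ep] Hp']]]]; subst.
by rewrite /= ltn_add2l IH.
Qed.

Lemma uniq_vertices t : uniq (vertices t).
Proof.
elim/tree_ind': t => [//|ts IH]; rewrite verticesE /=.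
apply/andP; split.
  by apply/negP => /mem_vsP[j [p [_ E _]]].
elim: ts IH 0 => [|u l IHl] IH i //=; rewrite cat_uniq; apply/and3P; split.
- by rewrite map_inj_uniq ?(IH 0) // => x y [].
- apply/hasPn => y /mem_vsP[j [q [_ -> _]]]; apply/mapP => [[p _ [E]]].
  by move: E; rewrite addSn => /eqP; rewrite -addnS -{2}[i]addn0 eqn_add2l.
- by apply: IHl => j; exact: (IH j.+1).
Qed.

Definition Good (s : seq (seq nat * nat)) (f : seq nat -> nat) :=
  forall x y, x \in s -> y \in s -> index x s < index y s ->
    ~~ on_common_path x.1 y.1 -> f x.1 < f y.1.

Lemma good_cat s1 s2 f : Good s1 f -> Good s2 f ->
  (forall x y, x \in s1 -> y \in s2 -> ~~ on_common_path x.1 y.1 -> f x.1 < f y.1) ->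
  Good (s1 ++ s2) f.
Proof.
move=> G1 G2 C x y; rewrite !mem_cat !index_cat.
case Hx: (x \in s1); case Hy: (y \in s1) => /= Hxm Hym Hi Hc.
- exact: G1.
- exact: C.
- by move: Hi; rewrite ltnNge (leq_trans (ltnW _) (leq_addr _ _)) // index_mem.
- by apply: G2 => //; rewrite -(ltn_add2l (size s1)).
Qed.

Lemma good_map s f g i c : Good s f -> (forall p, g (i :: p) = c + f p) ->
  Good (map (fun b => (i :: b.1, b.2)) s) g.
Proof.
have inj : injective (fun b : seq nat * nat => (i :: b.1, b.2)).
  by move=> [p k] [q l] /= [-> ->].
move=> G E x y /mapP[a Ha ->] /mapP[b Hb ->]; rewrite !index_map //= => Hi.
rewrite /on_common_path !prefix_cons eqxx /= !E ltn_add2l; exact: G.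
Qed.

Lemma good_nil f : Good [::] f.
Proof. by []. Qed.

Lemma good_single a f : Good [:: a] f.
Proof. by move=> x y; rewrite !inE => /eqP-> /eqP->; rewrite ltnn. Qed.

Lemma ocp_nil p : on_common_path [::] p.
Proof. by rewrite /on_common_path prefix0s. Qed.

Lemma ocp_sym p q : on_common_path p q = on_common_path q p.
Proof. by rewrite /on_common_path orbC. Qed.

Lemma fwd t : Good (branchings t) (inc t).
Proof.
elim/tree_ind': t => [|ts IH]; first exact: good_nil.
rewrite branchingsE; suff: forall l i, drop i ts = l -> Good (bs i l) (inc (Node ts)).
  by apply; rewrite drop0.
elim=> [|u l IHl] i Hd; first exact: good_nil.
have Hi : i < size ts by rewrite -subn_gt0 -size_drop Hd.
have Hu : nth Leaf ts i = u by rewrite -[i]addn0 -nth_drop Hd.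
have Hd' : drop i.+1 ts = l by rewrite -addn1 addnC -drop_drop Hd /= drop0.
have Hblk : Good (blk i u) (inc (Node ts)).
  apply: good_cat.
  - by case: (i == 0); [exact: good_nil | exact: good_single].
  - by rewrite -Hu; apply: (good_map (c := S ts i) (IH i)).
  - move=> x y; case: (i == 0) => //; rewrite inE => /eqP-> _ /=.
    by rewrite ocp_nil.
rewrite bs_cons; apply: good_cat => //; first exact: IHl.
move=> x y Hx /mem_bsP[->|[j [q [Hj Ey Hq]]]]; first by rewrite ocp_sym ocp_nil.
move: Hx; rewrite /blk mem_cat => /orP[|/mapP[a Ha ->]].
  by case: (i == 0) => //; rewrite inE => /eqP-> /=; rewrite ocp_nil.
move=> _; rewrite Ey /=.
have Hq' : q \in vertices (nth Leaf ts (i.+1 + j)).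
  by rewrite -nth_drop Hd'; exact: (branch_vert Hq).
have /andP[H1 _] := inc_range Hq'.
have /andP[_ H2] := inc_range (branch_vert Ha).
rewrite -/(S ts i) -/(S ts (i.+1 + j)).
rewrite Hu.
have E1 := S_step Hi; rewrite Hu in E1.
have E2 := S_mono ts (leq_addr j i.+1).
rewrite -E1 in E2.
apply: (@leq_trans (S ts (i.+1 + j)).+1).
  by rewrite ltnS; apply: leq_trans E2; rewrite leq_add2l.
by rewrite -addn1 leq_add2l.
Qed.

Definition dec_prop t (f : seq nat -> nat) := forall v i, v \in vertices t ->
  rcons v i \in vertices t -> f (rcons v i) < f v.
Definition cond_prop t (f : seq nat -> nat) := forall b b' : seq nat * nat,
  left_of t b b' -> ~~ on_common_path b.1 b'.1 -> f b.1 < f b'.1.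

Lemma chain t f v s : dec_prop t f -> v ++ s \in vertices t -> s != [::] ->
  f (v ++ s) < f v.
Proof.
elim/last_ind: s => [//|s x IH] Hd Hv _.
rewrite -rcons_cat in Hv *.
have Hvs : v ++ s \in vertices t by apply: (vert_prefix (s := [:: x])); rewrite cats1.
apply: leq_trans (Hd _ _ Hvs Hv) _.
case: (s =P [::]) => [->|/eqP ne]; first by rewrite cats0.
exact: ltnW (IH Hd Hvs ne).
Qed.

Definition R t (v w : seq nat) : Prop := (v != w /\ prefix w v) \/
  (~~ on_common_path v w /\ index (v, 1) (branchings t) < index (w, 1) (branchings t)).

Lemma R_lt t f v w : wf t -> dec_prop t f -> cond_prop t f ->
  v \in vertices t -> w \in vertices t -> R t v w -> f v < f w.
Proof.
move=> Hwf Hd Hc Hv Hw [[Hne /prefixP[s Es]]|[Hn Hi]].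
  subst v; apply: chain Hd Hv _; apply: contra Hne => /eqP->.
  by rewrite cats0.
apply: (Hc (v, 1) (w, 1)) => //.
by rewrite /left_of !vert_branch.
Qed.

Lemma R_total t v w : wf t -> v \in vertices t -> w \in vertices t -> v != w ->
  R t v w \/ R t w v.
Proof.
move=> Hwf Hv Hw Hne.
case Hp1: (prefix w v); first by left; left.
case Hp2: (prefix v w); first by right; left; rewrite eq_sym.
have Hn : ~~ on_common_path v w by rewrite /on_common_path Hp1 Hp2.
have Hn' : ~~ on_common_path w v by rewrite ocp_sym.
case: (ltngtP (index (v, 1) (branchings t)) (index (w, 1) (branchings t))) => H.
- by left; right.
- by right; right.
- have := nth_index ([::], 0) (vert_branch Hwf Hv).
  rewrite H (nth_index _ (vert_branch Hwf Hw)) => [[E]].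
  by rewrite E eqxx in Hne.
Qed.

Lemma same_order t f g v w : wf t -> dec_prop t f -> cond_prop t f ->
  dec_prop t g -> cond_prop t g ->
  v \in vertices t -> w \in vertices t -> f v < f w -> g v < g w.
Proof.
move=> Hwf Hdf Hcf Hdg Hcg Hv Hw Hlt.
have Hne : v != w by apply/eqP => E; subst; rewrite ltnn in Hlt.
case: (R_total Hwf Hv Hw Hne) => HR; first exact: (R_lt Hwf Hdg Hcg).
by have := R_lt Hwf Hdf Hcf Hw Hv HR; rewrite ltnNge ltnW.
Qed.

Lemma inj_order t f : wf t -> dec_prop t f -> cond_prop t f ->
  {in vertices t &, injective f}.
Proof.
move=> Hwf Hd Hc v w Hv Hw E; apply/eqP; apply/negPn/negP => Hne.
by case: (R_total Hwf Hv Hw Hne) => HR;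
  [have := R_lt Hwf Hd Hc Hv Hw HR | have := R_lt Hwf Hd Hc Hw Hv HR];
  rewrite E ltnn.
Qed.

Lemma count_rank (V : seq (seq nat)) (f : seq nat -> nat) k v : uniq V ->
  {in V &, injective f} -> (forall w, w \in V -> 1 <= f w <= k) ->
  (forall l, 1 <= l <= k -> exists2 w, w \in V & f w = l) -> v \in V ->
  f v = count (fun w => f w <= f v) V.
Proof.
move=> U I Rg Sj Hv; rewrite -size_filter; set W := filter _ V.
have UW : uniq (map f W).
  rewrite map_inj_in_uniq ?filter_uniq // => x y.
  by rewrite !mem_filter => /andP[_ Hx] /andP[_ Hy]; exact: I.
have E : map f W =i iota 1 (f v).
  move=> l; rewrite mem_iota; apply/mapP/idP.
    move=> [w]; rewrite mem_filter => /andP[Hle Hw] ->.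
    have /andP[H1 _] := Rg w Hw.
    by rewrite H1 add1n ltnS.
  move=> /andP[H1 H2]; rewrite add1n ltnS in H2.
  have /andP[_ Hk] := Rg v Hv.
  have [w Hw Hfw] := Sj l (introT andP (conj H1 (leq_trans H2 Hk))).
  by exists w; rewrite // mem_filter Hfw H2 Hw.
by rewrite -(size_map f W) (perm_size (uniq_perm UW (iota_uniq _ _) E)) size_iota.
Qed.

Theorem lemma4p6 (t : tree) (lam : seq nat -> nat) :
  increasing_tree t lam ->
  (left_increasing t lam <->
   (forall b b' : seq nat * nat, left_of t b b' ->
      ~~ on_common_path b.1 b'.1 -> lam b.1 < lam b'.1)).
Proof.
move=> [Hwf [k [Hr Hs Hd]]]; split.
  move=> Hli b b' Hl Hc; have /and3P[Hb Hb' Hi] := Hl.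
  rewrite !Hli ?branch_vert //; exact: fwd.
move=> Hc v Hv.
have decI : dec_prop t (inc t) by move=> w i; exact: inc_dec.
have condI : cond_prop t (inc t).
  by move=> b b' /and3P[Hb Hb' Hi]; exact: fwd.
have U := uniq_vertices t.
have injI := inj_order Hwf decI condI.
have injL := inj_order Hwf Hd Hc.
have rangeI : forall w, w \in vertices t -> 1 <= inc t w <= nverts t.
  by move=> w /inc_range.
have surjI : forall l, 1 <= l <= nverts t ->
    exists2 w, w \in vertices t & inc t w = l.
  move=> l Hl.
  have h1 : uniq (map (inc t) (vertices t)) by rewrite map_inj_in_uniq.
  have h2 : {subset map (inc t) (vertices t) <= iota 1 (nverts t)}.
    by move=> x /mapP[w Hw ->]; rewrite mem_iota add1n ltnS; exact: rangeI.
  have h3 : size (iota 1 (nverts t)) <= size (map (inc t) (vertices t)).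
    by rewrite size_iota size_map.
  have [_ E] := uniq_min_size h1 h2 h3.
  have : l \in iota 1 (nverts t) by rewrite mem_iota add1n ltnS.
  by rewrite -E => /mapP[w Hw ->]; exists w.
rewrite (count_rank U injL Hr Hs Hv) (count_rank U injI rangeI surjI Hv).
apply: eq_in_count => w Hw /=.
apply/idP/idP => H; rewrite leqNgt; apply/negP => H'; move: H; rewrite leqNgt => /negP; apply.
  exact: (same_order Hwf decI condI Hd Hc Hv Hw H').
exact: (same_order Hwf Hd Hc decI condI Hv Hw H').
Qed.
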